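(* For $\ell=0,1,\ldots,N$, and real $x\in\mathbb{R}^N$, $y\in\mathbb{R}^{N-\ell}$ with pairwise distinct coordinates, $$\big(H_{\rm nr}(x_1,\ldots,x_N)-H_{\rm nr}(y_1,\ldots,y_{N-\ell})\big)\Psi_{\ell,\rm nr}(x,y)=-\frac{\mu^2g^2}{24}\ell(4\ell^2-1)\Psi_{\ell,\rm nr}(x,y),$$ where $\Psi_{\ell,\rm nr}(x,y)=W_{\rm nr}(x)^{1/2}W_{\rm nr}(y)^{1/2}\mathcal{K}_\ell(x,y)$ and $$\mathcal{K}_\ell(x,y)=\frac{\exp\big(\frac{\mu g\ell}{2\hbar}\big(\sum_{n=1}^{N-\ell}y_n-\sum_{m=1}^Nx_m\big)\big)}{\prod_{m=1}^N\prod_{n=1}^{N-\ell}[2\cosh(\mu(x_m-y_n)/2)]^{g/\hbar}}.$$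
   Context: Fix $\hbar,\mu,g>0$. For $n$ variables, $H_{\rm nr}(x_1,\ldots,x_n)=-\frac{\hbar^2}{2}\sum_{j=1}^n\partial_{x_j}^2+g(g-\hbar)\sum_{1\le j<l\le n}\frac{\mu^2}{4\sinh^2(\mu(x_j-x_l)/2)}$ (for $n=0$ this is $0$), and $W_{\rm nr}(x)^{1/2}=\prod_{1\le j<k\le n}\big(4\sinh^2(\mu(x_j-x_k)/2)\big)^{g/(2\hbar)}$ with positive real powers. *)

(* Defs.v *)
From Stdlib Require Import Reals Lra.
From Coquelicot Require Import Coquelicot.
Open Scope R_scope.

(* Points of R^n are functions nat -> R; only indices 0..n-1 are relevant. *)

Fixpoint sumR (n : nat) (f : nat -> R) : R :=
  match n with O => 0 | S k => sumR k f + f k end.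
Fixpoint prodR (n : nat) (f : nat -> R) : R :=
  match n with O => 1 | S k => prodR k f * f k end.

Definition distinct_coords (n : nat) (x : nat -> R) : Prop :=
  forall i j, (i < n)%nat -> (j < n)%nat -> i <> j -> x i <> x j.

Definition upd (x : nat -> R) (j : nat) (t : R) : nat -> R :=
  fun i => if Nat.eqb i j then t else x i.

Definition partial2 (F : (nat -> R) -> R) (j : nat) (x : nat -> R) : R :=
  Derive_n (fun t => F (upd x j t)) 2 (x j).

Definition H_nr (hbar mu g : R) (n : nat) (F : (nat -> R) -> R) (x : nat -> R) : R :=
  - (hbar ^ 2 / 2) * sumR n (fun j => partial2 F j x)
  + g * (g - hbar) *
    sumR n (fun j => sumR n (fun l =>
      if (j <? l)%nat then mu ^ 2 / (4 * (sinh (mu * (x j - x l) / 2)) ^ 2) else 0))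
    * F x.

Definition W_nr_sqrt (hbar mu g : R) (n : nat) (x : nat -> R) : R :=
  prodR n (fun j => prodR n (fun k =>
    if (j <? k)%nat then Rpower (4 * (sinh (mu * (x j - x k) / 2)) ^ 2) (g / (2 * hbar))
    else 1)).

Definition K_l (hbar mu g : R) (N l : nat) (x y : nat -> R) : R :=
  exp (mu * g * INR l / (2 * hbar) *
       (sumR (N - l) (fun n => y n) - sumR N (fun m => x m)))
  / prodR N (fun m => prodR (N - l) (fun n =>
       Rpower (2 * cosh (mu * (x m - y n) / 2)) (g / hbar))).

Definition Psi_l (hbar mu g : R) (N l : nat) (x y : nat -> R) : R :=
  W_nr_sqrt hbar mu g N x * W_nr_sqrt hbar mu g (N - l) y * K_l hbar mu g N l x y.

(* Main.v *)
Require Import Defs.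
From Stdlib Require Import Reals Lra Lia Psatz FunctionalExtensionality.
From Coquelicot Require Import Coquelicot.
Open Scope R_scope.

Lemma sumR_ext n f g : (forall i, (i < n)%nat -> f i = g i) -> sumR n f = sumR n g.
Proof. induction n; simpl; intros H; [reflexivity|]. rewrite IHn by (intros; apply H; lia). rewrite H by lia; reflexivity. Qed.

Lemma sumR_plus n f g : sumR n (fun i => f i + g i) = sumR n f + sumR n g.
Proof. induction n; simpl; [lra|]. rewrite IHn; lra. Qed.

Lemma sumR_minus n f g : sumR n (fun i => f i - g i) = sumR n f - sumR n g.
Proof. induction n; simpl; [lra|]. rewrite IHn; lra. Qed.

Lemma sumR_scal n c f : sumR n (fun i => c * f i) = c * sumR n f.
Proof. induction n; simpl; [lra|]. rewrite IHn; lra. Qed.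

Lemma sumR_const n c : sumR n (fun _ => c) = INR n * c.
Proof. induction n; simpl sumR; [simpl; lra|]. rewrite IHn, S_INR; lra. Qed.

Lemma sumR_zero n : sumR n (fun _ => 0) = 0.
Proof. rewrite sumR_const; lra. Qed.

Lemma sumR_swap n m (F : nat -> nat -> R) :
  sumR n (fun i => sumR m (fun j => F i j)) = sumR m (fun j => sumR n (fun i => F i j)).
Proof.
  induction n; simpl.
  - symmetry; apply sumR_zero.
  - rewrite IHn, <- sumR_plus; reflexivity.
Qed.

Lemma sumR_delta n j f : (j < n)%nat ->
  sumR n (fun k => if Nat.eqb k j then f k else 0) = f j.
Proof.
  induction n; intros H; [lia|]. simpl.
  destruct (Nat.eqb n j) eqn:E.
  - apply Nat.eqb_eq in E; subst j.
    rewrite (sumR_ext _ _ (fun _ => 0)); [rewrite sumR_zero; lra|].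
    intros i Hi; destruct (Nat.eqb i n) eqn:E2; [apply Nat.eqb_eq in E2; lia|reflexivity].
  - apply Nat.eqb_neq in E. rewrite IHn by lia; lra.
Qed.

Lemma sumR_skip n j f : (j < n)%nat ->
  sumR n (fun k => if Nat.eqb k j then 0 else f k) = sumR n f - f j.
Proof.
  intros H. rewrite <- (sumR_delta n j f H), <- sumR_minus.
  apply sumR_ext; intros i _; destruct (Nat.eqb i j); lra.
Qed.

Lemma prodR_exp n f : prodR n (fun i => exp (f i)) = exp (sumR n f).
Proof. induction n; simpl; [rewrite exp_0; reflexivity|]. rewrite IHn, exp_plus; reflexivity. Qed.

Lemma prodR_ext n f g : (forall i, (i < n)%nat -> f i = g i) -> prodR n f = prodR n g.
Proof. induction n; simpl; intros H; [reflexivity|]. rewrite IHn by (intros; apply H; lia). rewrite H by lia; reflexivity. Qed.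

Definition cth a := cosh a / sinh a.
Definition th a := sinh a / cosh a.

Lemma cosh_pos'' x : 0 < cosh x.
Proof. unfold cosh. pose proof (exp_pos x); pose proof (exp_pos (-x)); lra. Qed.

Lemma sinh_diff a b : sinh (a - b) = (exp a * exp a - exp b * exp b) / (2 * exp a * exp b).
Proof.
  unfold sinh. replace (- (a - b)) with (b - a) by ring. unfold Rminus.
  rewrite !exp_plus, !exp_Ropp. pose proof (exp_pos a); pose proof (exp_pos b). field; lra.
Qed.
Lemma cosh_diff a b : cosh (a - b) = (exp a * exp a + exp b * exp b) / (2 * exp a * exp b).
Proof.
  unfold cosh. replace (- (a - b)) with (b - a) by ring. unfold Rminus.
  rewrite !exp_plus, !exp_Ropp. pose proof (exp_pos a); pose proof (exp_pos b). field; lra.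
Qed.

Lemma sq_neq a b : a <> b -> exp a * exp a - exp b * exp b <> 0.
Proof.
  intros H E. pose proof (exp_pos a); pose proof (exp_pos b).
  assert (exp a = exp b) by nra. apply exp_inv in H2. auto.
Qed.

Lemma cth_diff a b : a <> b -> cth (a - b) = (exp a * exp a + exp b * exp b) / (exp a * exp a - exp b * exp b).
Proof.
  intros H. unfold cth. rewrite sinh_diff, cosh_diff. pose proof (sq_neq a b H).
  pose proof (exp_pos a); pose proof (exp_pos b). field; repeat split; lra.
Qed.

Lemma th_diff a b : th (a - b) = (exp a * exp a - exp b * exp b) / (exp a * exp a + exp b * exp b).
Proof.
  unfold th. rewrite sinh_diff, cosh_diff.
  pose proof (exp_pos a); pose proof (exp_pos b). field; repeat split; nra.
Qed.

Lemma cth_triple a b c : a <> b -> b <> c -> c <> a ->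
  cth (a - b) * cth (a - c) + cth (b - c) * cth (b - a) + cth (c - a) * cth (c - b) = 1.
Proof.
  intros H1 H2 H3. rewrite !cth_diff by auto.
  pose proof (sq_neq a b H1); pose proof (sq_neq b c H2); pose proof (sq_neq c a H3).
  field. repeat split; try lra.
Qed.

Lemma cth_th a b c : a <> b ->
  cth (a - b) * (th (a - c) - th (b - c)) = 1 - th (a - c) * th (b - c).
Proof.
  intros H. rewrite cth_diff, !th_diff by auto. pose proof (sq_neq a b H).
  pose proof (exp_pos a); pose proof (exp_pos b); pose proof (exp_pos c).
  field. repeat split; nra.
Qed.

Lemma cth_anti a b : a <> b -> cth (b - a) = - cth (a - b).
Proof.
  intros H. rewrite !cth_diff by auto. pose proof (sq_neq a b H).
  field. split; lra.
Qed.

Lemma th_anti a b : th (b - a) = - th (a - b).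
Proof.
  rewrite !th_diff. pose proof (exp_pos a); pose proof (exp_pos b). field. nra.
Qed.

Lemma csch_cth a b : a <> b -> / sinh (a - b) ^ 2 = cth (a - b) ^ 2 - 1.
Proof.
  intros H. unfold cth. rewrite sinh_diff, cosh_diff. pose proof (sq_neq a b H).
  pose proof (exp_pos a); pose proof (exp_pos b). field. repeat split; nra.
Qed.

Lemma sech_sym a b : / cosh (a - b) ^ 2 = / cosh (b - a) ^ 2.
Proof. rewrite !cosh_diff. pose proof (exp_pos a); pose proof (exp_pos b). field. nra. Qed.

Lemma sumR_mulr n f c : sumR n f * c = sumR n (fun i => f i * c).
Proof. induction n; simpl; [ring|]. rewrite <- IHn; ring. Qed.

Lemma sumR_mul n m f g : sumR n f * sumR m g = sumR n (fun i => sumR m (fun j => f i * g j)).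
Proof.
  rewrite sumR_mulr. apply sumR_ext; intros i _. rewrite Rmult_comm, sumR_mulr.
  apply sumR_ext; intros; ring.
Qed.

Lemma sumR_swap3 n m p (F : nat -> nat -> nat -> R) :
  sumR n (fun i => sumR m (fun j => sumR p (fun k => F i j k))) =
  sumR p (fun k => sumR n (fun i => sumR m (fun j => F i j k))).
Proof.
  transitivity (sumR n (fun i => sumR p (fun k => sumR m (fun j => F i j k)))).
  - apply sumR_ext; intros; apply sumR_swap.
  - apply (sumR_swap n p (fun i k => sumR m (fun j => F i j k))).
Qed.

Lemma pair_sym n (F : nat -> nat -> R) :
  2 * sumR n (fun j => sumR n (fun k => F j k)) = sumR n (fun j => sumR n (fun k => F j k + F k j)).
Proof.
  replace (2 * _) with (sumR n (fun j => sumR n (fun k => F j k)) + sumR n (fun j => sumR n (fun k => F k j))).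
  - rewrite <- sumR_plus. apply sumR_ext; intros; rewrite sumR_plus; reflexivity.
  - rewrite (sumR_swap n n (fun k j => F j k)). ring.
Qed.

Lemma sumR_csub n c f : sumR n (fun i => c - f i) = INR n * c - sumR n f.
Proof. rewrite sumR_minus, sumR_const; reflexivity. Qed.

Definition distinct (n : nat) (u : nat -> R) := forall i j, (i < n)%nat -> (j < n)%nat -> i <> j -> u i <> u j.
Definition Aof n (u : nat -> R) j := sumR n (fun k => if Nat.eqb k j then 0 else cth (u j - u k)).
Definition Pof n (u : nat -> R) j := sumR n (fun k => if Nat.eqb k j then 0 else / sinh (u j - u k) ^ 2).
Definition Bof m (u v : nat -> R) j := sumR m (fun n => th (u j - v n)).
Definition Cof n (u v : nat -> R) k := sumR n (fun m => th (u m - v k)).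
Definition Sof n m (u v : nat -> R) := sumR n (fun j => sumR m (fun k => th (u j - v k) ^ 2)).

Lemma I3 N M u v : distinct N u ->
  2 * sumR N (fun j => Aof N u j * Bof M u v j) =
  INR N * (INR N - 1) * INR M - sumR M (fun k => Cof N u v k ^ 2) + Sof N M u v.
Proof.
  intros Hd.
  transitivity (2 * sumR N (fun j => sumR N (fun k => if Nat.eqb k j then 0 else cth (u j - u k) * Bof M u v j))).
  { f_equal. apply sumR_ext; intros j _. unfold Aof. rewrite sumR_mulr. apply sumR_ext; intros k _.
    destruct (Nat.eqb k j); ring. }
  rewrite pair_sym.
  transitivity (sumR N (fun j => sumR N (fun k => if Nat.eqb k j then 0 else
     sumR M (fun n => 1 - th (u j - v n) * th (u k - v n))))).
  { apply sumR_ext; intros j Hj. apply sumR_ext; intros k Hk. rewrite (Nat.eqb_sym j k).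
    destruct (Nat.eqb k j) eqn:E; [ring|]. apply Nat.eqb_neq in E.
    rewrite (cth_anti (u j) (u k)) by (apply Hd; auto).
    transitivity (cth (u j - u k) * (Bof M u v j - Bof M u v k)); [ring|].
    unfold Bof. rewrite <- sumR_minus, <- sumR_scal. apply sumR_ext; intros n _.
    apply cth_th. apply Hd; auto. }
  transitivity (sumR N (fun j => sumR N (fun k => sumR M (fun n => 1 - th (u j - v n) * th (u k - v n)))
     - sumR M (fun n => 1 - th (u j - v n) * th (u j - v n)))).
  { apply sumR_ext; intros j Hj. rewrite sumR_skip by auto. reflexivity. }
  rewrite sumR_minus.
  rewrite (sumR_swap3 N N M (fun j k n => 1 - th (u j - v n) * th (u k - v n))).
  assert (E1 : sumR M (fun k => Cof N u v k ^ 2) =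
     sumR M (fun n => sumR N (fun j => sumR N (fun k => th (u j - v n) * th (u k - v n))))).
  { apply sumR_ext; intros n _. replace (Cof N u v n ^ 2) with (Cof N u v n * Cof N u v n) by ring.
    unfold Cof. apply sumR_mul. }
  assert (E2 : sumR M (fun n => sumR N (fun j => sumR N (fun k => 1 - th (u j - v n) * th (u k - v n)))) =
     INR M * (INR N * (INR N * 1)) - sumR M (fun n => sumR N (fun j => sumR N (fun k => th (u j - v n) * th (u k - v n))))).
  { rewrite <- sumR_csub. apply sumR_ext; intros n _. rewrite <- sumR_csub. apply sumR_ext; intros j _.
    apply sumR_csub. }
  assert (E3 : sumR N (fun j => sumR M (fun n => 1 - th (u j - v n) * th (u j - v n))) = INR N * (INR M * 1) - Sof N M u v).
  { unfold Sof. rewrite <- sumR_csub. apply sumR_ext; intros j _. rewrite <- sumR_csub.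
    apply sumR_ext; intros; ring. }
  rewrite E1, E2, E3. ring.
Qed.

Lemma I2 N u : distinct N u -> sumR N (Aof N u) = 0.
Proof.
  intros Hd. cut (2 * sumR N (Aof N u) = 0); [lra|].
  unfold Aof. rewrite (pair_sym N (fun j k => if Nat.eqb k j then 0 else cth (u j - u k))).
  transitivity (sumR N (fun _ => 0)); [|apply sumR_zero]. apply sumR_ext; intros j Hj.
  transitivity (sumR N (fun _ => 0)); [|apply sumR_zero]. apply sumR_ext; intros k Hk.
  rewrite (Nat.eqb_sym j k). destruct (Nat.eqb k j) eqn:E; [ring|]. apply Nat.eqb_neq in E.
  rewrite (cth_anti (u j) (u k)) by (apply Hd; auto). ring.
Qed.

Lemma I7 N M u v : sumR N (Bof M u v) = sumR M (Cof N u v).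
Proof. unfold Bof, Cof. apply sumR_swap. Qed.

Lemma Cof_B N u v k : Cof N u v k = - Bof N v u k.
Proof. unfold Cof, Bof. transitivity (sumR N (fun m => -1 * th (v k - u m))).
  - apply sumR_ext; intros m _. rewrite (th_anti (v k) (u m)). ring.
  - rewrite sumR_scal. ring. Qed.

Lemma Sof_sym N M u v : Sof M N v u = Sof N M u v.
Proof. unfold Sof. rewrite sumR_swap. apply sumR_ext; intros; apply sumR_ext; intros.
  rewrite th_anti. ring. Qed.

Lemma I6 N M u v : distinct M v ->
  2 * sumR M (fun n => Aof M v n * Cof N u v n) =
  - (INR M * (INR M - 1) * INR N - sumR N (fun j => Bof M u v j ^ 2) + Sof N M u v).
Proof.
  intros Hd. pose proof (I3 M N v u Hd) as H3.
  assert (E1 : sumR M (fun n => Aof M v n * Cof N u v n) = - sumR M (fun n => Aof M v n * Bof N v u n)).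
  { transitivity (sumR M (fun n => -1 * (Aof M v n * Bof N v u n))); [|rewrite sumR_scal; ring].
    apply sumR_ext; intros. rewrite Cof_B. ring. }
  assert (E2 : sumR N (fun k => Cof M v u k ^ 2) = sumR N (fun j => Bof M u v j ^ 2)).
  { apply sumR_ext; intros. rewrite Cof_B. ring. }
  rewrite E2, Sof_sym in H3. rewrite E1. lra.
Qed.

Lemma sumR_if n (b : bool) f : sumR n (fun c => if b then f c else 0) = if b then sumR n f else 0.
Proof. destruct b; [reflexivity|apply sumR_zero]. Qed.

Lemma sumR_delta_c n j K : (j < n)%nat -> sumR n (fun k => if Nat.eqb k j then K else 0) = K.
Proof. intros H. apply (sumR_delta n j (fun _ => K) H). Qed.

Lemma cyc3 n (F : nat -> nat -> nat -> R) :
  sumR n (fun a => sumR n (fun b => sumR n (fun c => F a b c))) =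
  sumR n (fun a => sumR n (fun b => sumR n (fun c => F b c a))).
Proof.
  symmetry.
  rewrite (sumR_swap n n (fun a b => sumR n (fun c => F b c a))).
  apply sumR_ext; intros b _. apply sumR_swap.
Qed.

Section I1.
Variables (N : nat) (u : nat -> R).
Hypothesis Hd : distinct N u.

Let F a b c := if Nat.eqb b a then 0 else if Nat.eqb c a then 0 else cth (u a - u b) * cth (u a - u c).
Let T (G : nat -> nat -> nat -> R) := sumR N (fun a => sumR N (fun b => sumR N (fun c => G a b c))).
Let Q := sumR N (fun a => sumR N (fun b => if Nat.eqb b a then 0 else cth (u a - u b) ^ 2)).

Lemma I1_TF : sumR N (fun j => Aof N u j ^ 2) = T F.
Proof.
  unfold T. apply sumR_ext; intros a _. replace (Aof N u a ^ 2) with (Aof N u a * Aof N u a) by ring.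
  unfold Aof. rewrite sumR_mul. apply sumR_ext; intros b _. apply sumR_ext; intros c _.
  unfold F. destruct (Nat.eqb b a); destruct (Nat.eqb c a); ring.
Qed.

Lemma T_plus G1 G2 : T (fun a b c => G1 a b c + G2 a b c) = T G1 + T G2.
Proof.
  unfold T. rewrite <- sumR_plus. apply sumR_ext; intros. rewrite <- sumR_plus.
  apply sumR_ext; intros. apply sumR_plus.
Qed.

Lemma I1_3T : 3 * T F = T (fun a b c => F a b c + F b c a + F c a b).
Proof.
  rewrite (T_plus (fun a b c => F a b c + F b c a)), T_plus.
  assert (E1 : T (fun a b c => F b c a) = T F) by (unfold T; symmetry; apply cyc3).
  assert (E2 : T (fun a b c => F c a b) = T F).
  { unfold T. rewrite (cyc3 N (fun a b c => F c a b)). reflexivity. }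
  rewrite E1, E2. ring.
Qed.
Let G1 a b c := if Nat.eqb b a then 0 else if Nat.eqb c a then 0 else if Nat.eqb c b then 0 else 1.
Let G2 a b c := if Nat.eqb b a then (if Nat.eqb c a then 0 else cth (u c - u a) ^ 2) else 0.
Let G3 a b c := if Nat.eqb c b then (if Nat.eqb b a then 0 else cth (u a - u b) ^ 2) else 0.
Let G4 a b c := if Nat.eqb c a then (if Nat.eqb b a then 0 else cth (u b - u a) ^ 2) else 0.

Lemma T_ext G G' : (forall a b c, (a < N)%nat -> (b < N)%nat -> (c < N)%nat -> G a b c = G' a b c) -> T G = T G'.
Proof. intros H. unfold T. apply sumR_ext; intros. apply sumR_ext; intros. apply sumR_ext; intros. auto. Qed.

Lemma I1_pt : T (fun a b c => F a b c + F b c a + F c a b) =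
  T (fun a b c => G1 a b c + G2 a b c + G3 a b c + G4 a b c).
Proof.
  apply T_ext; intros a b c Ha Hb Hc. unfold F, G1, G2, G3, G4.
  rewrite (Nat.eqb_sym a b), (Nat.eqb_sym a c), (Nat.eqb_sym b c).
  destruct (Nat.eqb b a) eqn:E1; destruct (Nat.eqb c a) eqn:E2; destruct (Nat.eqb c b) eqn:E3;
  repeat match goal with
  | H : Nat.eqb _ _ = true |- _ => apply Nat.eqb_eq in H
  | H : Nat.eqb _ _ = false |- _ => apply Nat.eqb_neq in H
  end; try (exfalso; lia); subst; try ring.
  rewrite <- (cth_triple (u a) (u b) (u c)) by (apply Hd; auto). ring.
Qed.

Lemma Q_val : Q = sumR N (Pof N u) + INR N * (INR N - 1).
Proof.
  unfold Q, Pof. transitivity (sumR N (fun a => sumR N (fun b => if Nat.eqb b a then 0 else / sinh (u a - u b) ^ 2) + (INR N - 1))).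
  - apply sumR_ext; intros a Ha.
    transitivity (sumR N (fun b => (if Nat.eqb b a then 0 else / sinh (u a - u b) ^ 2) + (1 - if Nat.eqb b a then 1 else 0))).
    + apply sumR_ext; intros b Hb. destruct (Nat.eqb b a) eqn:E; [ring|]. apply Nat.eqb_neq in E.
      rewrite csch_cth by (apply Hd; auto). ring.
    + rewrite sumR_plus, sumR_csub, sumR_delta_c by auto. ring.
  - rewrite sumR_plus, sumR_const. ring.
Qed.

Lemma TG1 : T G1 = INR N * (INR N - 1) * (INR N - 2).
Proof.
  unfold T, G1. transitivity (sumR N (fun a => sumR N (fun b => if Nat.eqb b a then 0 else INR N - 2))).
  - apply sumR_ext; intros a Ha. apply sumR_ext; intros b Hb. destruct (Nat.eqb b a) eqn:E.
    + apply sumR_zero.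
    + apply Nat.eqb_neq in E.
      transitivity (sumR N (fun c => 1 - (if Nat.eqb c a then 1 else 0) - (if Nat.eqb c b then 1 else 0))).
      * apply sumR_ext; intros c Hc. destruct (Nat.eqb c a) eqn:E2; destruct (Nat.eqb c b) eqn:E3;
        repeat match goal with
        | H : Nat.eqb _ _ = true |- _ => apply Nat.eqb_eq in H
        | H : Nat.eqb _ _ = false |- _ => apply Nat.eqb_neq in H
        end; try (exfalso; lia); ring.
      * rewrite !sumR_minus, sumR_const, !sumR_delta_c by auto. ring.
  - transitivity (sumR N (fun a => (INR N - 1) * (INR N - 2))).
    + apply sumR_ext; intros a Ha. rewrite (sumR_skip N a (fun _ => INR N - 2)) by auto.
      rewrite sumR_const. ring.
    + rewrite sumR_const. ring.
Qed.

Lemma TG2 : T G2 = Q.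
Proof.
  unfold T, G2, Q. apply sumR_ext; intros a Ha.
  transitivity (sumR N (fun b => if Nat.eqb b a then sumR N (fun c => if Nat.eqb c a then 0 else cth (u c - u a) ^ 2) else 0)).
  - apply sumR_ext; intros b Hb. apply sumR_if.
  - rewrite sumR_delta_c by auto. apply sumR_ext; intros c Hc.
    destruct (Nat.eqb c a) eqn:E; [reflexivity|]. apply Nat.eqb_neq in E.
    rewrite (cth_anti (u a) (u c)) by (apply Hd; auto). ring.
Qed.

Lemma TG3 : T G3 = Q.
Proof.
  unfold T, G3, Q. apply sumR_ext; intros a Ha. apply sumR_ext; intros b Hb.
  apply sumR_delta_c; auto.
Qed.

Lemma TG4 : T G4 = Q.
Proof.
  unfold T, G4, Q. apply sumR_ext; intros a Ha. apply sumR_ext; intros b Hb.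
  rewrite sumR_delta_c by auto. destruct (Nat.eqb b a) eqn:E; [reflexivity|]. apply Nat.eqb_neq in E.
  rewrite (cth_anti (u a) (u b)) by (apply Hd; auto). ring.
Qed.

Lemma I1 : sumR N (fun j => Aof N u j ^ 2) =
  sumR N (Pof N u) + INR N * (INR N - 1) + INR N * (INR N - 1) * (INR N - 2) / 3.
Proof.
  rewrite I1_TF. pose proof I1_3T as H. rewrite I1_pt, !T_plus, TG1, TG2, TG3, TG4, Q_val in H.
  lra.
Qed.
End I1.

Lemma sumR_S n f : sumR (S n) f = sumR n f + f n.
Proof. reflexivity. Qed.

Lemma sq_exp1 n a b L : sumR n (fun j => (a j - b j - L) ^ 2) =
  sumR n (fun j => a j ^ 2) + sumR n (fun j => b j ^ 2) + INR n * L ^ 2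
  - sumR n (fun j => a j * b j) * 2 - 2 * L * sumR n a + 2 * L * sumR n b.
Proof. induction n; [simpl; ring|]. rewrite !sumR_S, IHn, S_INR. ring. Qed.

Lemma sq_exp2 n a b L : sumR n (fun j => (a j + b j + L) ^ 2) =
  sumR n (fun j => a j ^ 2) + sumR n (fun j => b j ^ 2) + INR n * L ^ 2
  + sumR n (fun j => a j * b j) * 2 + 2 * L * sumR n a + 2 * L * sumR n b.
Proof. induction n; [simpl; ring|]. rewrite !sumR_S, IHn, S_INR. ring. Qed.

Lemma ALG N M u v : distinct N u -> distinct M v ->
  sumR N (fun j => (Aof N u j - Bof M u v j - (INR N - INR M)) ^ 2)
  - sumR M (fun n => (Aof M v n + Cof N u v n + (INR N - INR M)) ^ 2)
  = sumR N (Pof N u) - sumR M (Pof M v)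
    + (INR N - INR M) * (4 * (INR N - INR M) ^ 2 - 1) / 3.
Proof.
  intros Hu Hv. rewrite (sq_exp1 N (Aof N u) (Bof M u v)), (sq_exp2 M (Aof M v) (Cof N u v)).
  rewrite (I1 N u Hu), (I1 M v Hv), (I2 N u Hu), (I2 M v Hv), (I7 N M u v).
  pose proof (I3 N M u v Hu). pose proof (I6 N M u v Hv).
  nra.
Qed.

Lemma is_derive_sum n (f : nat -> R -> R) df t :
  (forall k, (k < n)%nat -> is_derive (f k) t (df k)) ->
  is_derive (fun s => sumR n (fun k => f k s)) t (sumR n df).
Proof.
  induction n; intros H; simpl.
  - apply (is_derive_const 0).
  - apply (is_derive_plus (fun s => sumR n (fun k => f k s)) (f n)).
    + apply IHn; intros; apply H; lia.
    + apply H; lia.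
Qed.

Section LS.
Variables hbar mu g : R.
Definition LS (w : R) := g / (2 * hbar) * ln (4 * sinh (mu * w / 2) ^ 2).
Definition LS1 (w : R) := g / hbar * (mu / 2) * (cosh (mu * w / 2) / sinh (mu * w / 2)).
Definition LS2 (w : R) := - (g / hbar) * (mu / 2) ^ 2 / sinh (mu * w / 2) ^ 2.
Definition LC (w : R) := g / hbar * ln (2 * cosh (mu * w / 2)).
Definition LC1 (w : R) := g / hbar * (mu / 2) * (sinh (mu * w / 2) / cosh (mu * w / 2)).
Definition LC2 (w : R) := g / hbar * (mu / 2) ^ 2 / cosh (mu * w / 2) ^ 2.
End LS.

Lemma cosh_pos' x : 0 < cosh x.
Proof. unfold cosh. pose proof (exp_pos x); pose proof (exp_pos (-x)); lra. Qed.

Lemma sinh_nz x : x <> 0 -> sinh x <> 0.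
Proof.
  intros H E. unfold sinh in E. assert (exp x = exp (- x)) by lra.
  apply exp_inv in H0. lra.
Qed.

Lemma dLS hbar mu g z t : 0 < hbar -> 0 < mu -> t <> z ->
  is_derive (fun s => LS hbar mu g (s - z)) t (LS1 hbar mu g (t - z)).
Proof.
  intros Hh Hm Hz. unfold LS, LS1.
  assert (Hs : sinh (mu * (t - z) / 2) <> 0) by (apply sinh_nz; intro; apply Hz; nra).
  unfold sinh, cosh in *. auto_derive;
  replace (mu * (t + - z) * / 2) with (mu * (t - z) / 2) by (unfold Rdiv; ring);
  set (e1 := exp (mu * (t - z) / 2)) in *; set (e2 := exp (- (mu * (t - z) / 2))) in *.
  - assert (e1 - e2 <> 0) by (intro E; apply Hs; rewrite E; lra).
    assert (0 < (e1 - e2) * (e1 - e2)) by (apply Rsqr_pos_lt; auto). nra.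
  - field. split; [intro E; apply Hs; rewrite E; lra|lra].
Qed.

Lemma dLS1 hbar mu g z t : 0 < hbar -> 0 < mu -> t <> z ->
  is_derive (fun s => LS1 hbar mu g (s - z)) t (LS2 hbar mu g (t - z)).
Proof.
  intros Hh Hm Hz. unfold LS1, LS2.
  assert (Hs : sinh (mu * (t - z) / 2) <> 0) by (apply sinh_nz; intro; apply Hz; nra).
  unfold sinh, cosh in *. auto_derive;
  replace (mu * (t + - z) * / 2) with (mu * (t - z) / 2) by (unfold Rdiv; ring);
  set (e1 := exp (mu * (t - z) / 2)) in *; set (e2 := exp (- (mu * (t - z) / 2))) in *.
  all: assert (He2 : e2 = / e1) by (unfold e1, e2; rewrite exp_Ropp; reflexivity);
  assert (He1 : 0 < e1) by apply exp_pos;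
  clearbody e1 e2; subst e2.
  - intro E; apply Hs; lra.
  - assert (e1 - / e1 <> 0) by (intro E; apply Hs; rewrite E; lra).
    field. repeat split; try lra.
    intro E; apply H. replace (e1 - / e1) with ((e1 * e1 - 1) / e1) by (field; lra). rewrite E. field. lra.
Qed.

Lemma dLC hbar mu g z t : 0 < hbar ->
  is_derive (fun s => LC hbar mu g (s - z)) t (LC1 hbar mu g (t - z)).
Proof.
  intros Hh. unfold LC, LC1.
  unfold sinh, cosh in *. auto_derive;
  replace (mu * (t + - z) * / 2) with (mu * (t - z) / 2) by (unfold Rdiv; ring);
  set (e1 := exp (mu * (t - z) / 2)) in *; set (e2 := exp (- (mu * (t - z) / 2))) in *;
  assert (He2 : e2 = / e1) by (unfold e1, e2; rewrite exp_Ropp; reflexivity);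
  assert (He1 : 0 < e1) by apply exp_pos;
  clearbody e1 e2; subst e2; assert (0 < / e1) by (apply Rinv_0_lt_compat; lra).
  - lra.
  - field. repeat split; try lra. 
    intro E. assert (e1 * e1 + 1 > 0) by nra. lra.
Qed.

Lemma dLC1 hbar mu g z t : 0 < hbar ->
  is_derive (fun s => LC1 hbar mu g (s - z)) t (LC2 hbar mu g (t - z)).
Proof.
  intros Hh. unfold LC1, LC2.
  unfold sinh, cosh in *. auto_derive;
  replace (mu * (t + - z) * / 2) with (mu * (t - z) / 2) by (unfold Rdiv; ring);
  set (e1 := exp (mu * (t - z) / 2)) in *; set (e2 := exp (- (mu * (t - z) / 2))) in *;
  assert (He2 : e2 = / e1) by (unfold e1, e2; rewrite exp_Ropp; reflexivity);
  assert (He1 : 0 < e1) by apply exp_pos;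
  clearbody e1 e2; subst e2; assert (0 < / e1) by (apply Rinv_0_lt_compat; lra).
  - lra.
  - field. repeat split; try lra. 
    intro E. assert (e1 * e1 + 1 > 0) by nra. lra.
Qed.

Lemma D2 f f1 f2 x0 : locally x0 (fun t => is_derive f t (f1 t)) -> is_derive f1 x0 f2 ->
  Derive_n f 2 x0 = f2.
Proof.
  intros H1 H2. simpl.
  rewrite (Derive_ext_loc _ f1).
  - apply is_derive_unique; exact H2.
  - eapply filter_imp; [|exact H1]. intros t Ht. apply is_derive_unique; exact Ht.
Qed.

Lemma locally_neq t0 c : c <> t0 -> @locally R_UniformSpace t0 (fun t => t <> c).
Proof.
  intros H. destruct (Rlt_dec c t0).
  - apply (locally_interval _ _ (Finite c) p_infty); simpl; auto. intros y Hy _; lra.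
  - apply (locally_interval _ _ m_infty (Finite c)); simpl; auto; [lra|]. intros y _ Hy; lra.
Qed.

Lemma locally_neq_all n j (z : nat -> R) t0 :
  (forall k, (k < n)%nat -> k <> j -> z k <> t0) ->
  @locally R_UniformSpace t0 (fun t => forall k, (k < n)%nat -> k <> j -> t <> z k).
Proof.
  induction n; intros H.
  - apply filter_forall. intros; lia.
  - eapply filter_imp; [|apply filter_and; [apply IHn; intros; apply H; lia|]].
    2: { destruct (Nat.eq_dec n j) as [E|E].
         - apply (filter_forall (fun t => n <> j -> t <> z n)). intros t1 Hn1; contradiction.
         - eapply filter_imp; [|apply (locally_neq t0 (z n)); apply H; lia]. intros t Ht _. exact Ht. }
    intros t [H1 H2] k Hk Hkj. destruct (Nat.eq_dec k n) as [->|Ne]; [apply H2; auto|apply H1; auto; lia].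
Qed.

Section Phi.
Variables (hbar mu g : R) (n p j : nat) (z w : nat -> R) (s C : R).
Hypotheses (Hh : 0 < hbar) (Hm : 0 < mu).

Definition phi t := sumR n (fun k => if Nat.eqb k j then 0 else LS hbar mu g (t - z k))
  - sumR p (fun m => LC hbar mu g (t - w m)) + s * t + C.
Definition phi1 t := sumR n (fun k => if Nat.eqb k j then 0 else LS1 hbar mu g (t - z k))
  - sumR p (fun m => LC1 hbar mu g (t - w m)) + s.
Definition phi2 t := sumR n (fun k => if Nat.eqb k j then 0 else LS2 hbar mu g (t - z k))
  - sumR p (fun m => LC2 hbar mu g (t - w m)).

Lemma is_derive_eq (f : R -> R) x l l' : is_derive f x l -> l = l' -> is_derive f x l'.
Proof. intros H ->; exact H. Qed.

Lemma dphi_gen (A B : R -> R) dA dB t : is_derive A t dA -> is_derive B t dB ->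
  forall s C, is_derive (fun t => A t - B t + s * t + C) t (dA - dB + s).
Proof.
  intros HA HB s0 C0.
  assert (H1 : is_derive (fun t => A t - B t) t (dA - dB)) by (apply (is_derive_minus A B); auto).
  assert (H2 : is_derive (fun t : R => s0 * t + C0) t s0) by (auto_derive; [exact I|ring]).
  pose proof (is_derive_plus _ _ _ _ _ H1 H2) as H3.
  eapply is_derive_ext; [|eapply is_derive_eq; [exact H3|]].
  - intro u; unfold plus; simpl; ring.
  - unfold plus; simpl; ring.
Qed.

Lemma dphi1_gen (A B : R -> R) dA dB t : is_derive A t dA -> is_derive B t dB ->
  forall s, is_derive (fun t => A t - B t + s) t (dA - dB).
Proof.
  intros HA HB s0.
  assert (H1 : is_derive (fun t => A t - B t) t (dA - dB)) by (apply (is_derive_minus A B); auto).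
  assert (H2 : is_derive (fun t : R => s0) t 0) by (auto_derive; [exact I|ring]).
  pose proof (is_derive_plus _ _ _ _ _ H1 H2) as H3.
  eapply is_derive_ext; [|eapply is_derive_eq; [exact H3|]].
  - intro u; unfold plus; simpl; ring.
  - unfold plus; simpl; ring.
Qed.

Lemma dphi t : (forall k, (k < n)%nat -> k <> j -> t <> z k) -> is_derive phi t (phi1 t).
Proof.
  intros H. unfold phi, phi1.
  apply (dphi_gen (fun t => sumR n _) (fun t => sumR p _)).
  - apply (is_derive_sum n (fun k t => if Nat.eqb k j then 0 else LS hbar mu g (t - z k))).
    intros k Hk. destruct (Nat.eqb k j) eqn:E.
    + auto_derive; [exact I|ring].
    + apply dLS; auto. apply H; auto. apply Nat.eqb_neq; auto.
  - apply (is_derive_sum p (fun m t => LC hbar mu g (t - w m))).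
    intros m Hm'. apply dLC; auto.
Qed.

Lemma dphi1 t : (forall k, (k < n)%nat -> k <> j -> t <> z k) -> is_derive phi1 t (phi2 t).
Proof.
  intros H. unfold phi1, phi2.
  apply (dphi1_gen (fun t => sumR n _) (fun t => sumR p _)).
  - apply (is_derive_sum n (fun k t => if Nat.eqb k j then 0 else LS1 hbar mu g (t - z k))).
    intros k Hk. destruct (Nat.eqb k j) eqn:E.
    + auto_derive; [exact I|ring].
    + apply dLS1; auto. apply H; auto. apply Nat.eqb_neq; auto.
  - apply (is_derive_sum p (fun m t => LC1 hbar mu g (t - w m))).
    intros m Hm'. apply dLC1; auto.
Qed.

Lemma phi_D2 : (j < n)%nat -> (forall k, (k < n)%nat -> k <> j -> z k <> z j) ->
  Derive_n (fun t => exp (phi t)) 2 (z j) = exp (phi (z j)) * (phi1 (z j) ^ 2 + phi2 (z j)).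
Proof.
  intros Hj H.
  apply (D2 _ (fun t => exp (phi t) * phi1 t)).
  - eapply filter_imp; [|apply (locally_neq_all n j z (z j) H)].
    intros t Ht. 
    eapply is_derive_ext; [intro; reflexivity|].
    replace (exp (phi t) * phi1 t) with (scal (phi1 t) (exp (phi t))) by (unfold scal; simpl; unfold mult; simpl; ring).
    apply (is_derive_comp exp phi). apply is_derive_exp. apply dphi; auto.
  - assert (Hz : forall k, (k < n)%nat -> k <> j -> z j <> z k) by (intros; apply not_eq_sym; auto).
    replace (exp (phi (z j)) * (phi1 (z j) ^ 2 + phi2 (z j))) with
      (plus (mult (exp (phi (z j)) * phi1 (z j)) (phi1 (z j))) (mult (exp (phi (z j))) (phi2 (z j))))
      by (unfold plus, mult; simpl; ring).
    apply (is_derive_mult (fun t => exp (phi t)) phi1).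
    + replace (exp (phi (z j)) * phi1 (z j)) with (scal (phi1 (z j)) (exp (phi (z j)))) by (unfold scal; simpl; unfold mult; simpl; ring).
      apply (is_derive_comp exp phi). apply is_derive_exp. apply dphi; auto.
    + apply dphi1; auto.
    + intros; unfold mult; simpl; ring.
Qed.
End Phi.

Definition Pair hbar mu g n (z : nat -> R) :=
  sumR n (fun p => sumR n (fun q => if Nat.ltb p q then LS hbar mu g (z p - z q) else 0)).
Definition Cross hbar mu g N M (x y : nat -> R) :=
  sumR N (fun m => sumR M (fun n => LC hbar mu g (x m - y n))).

Lemma W_exp hbar mu g n z : W_nr_sqrt hbar mu g n z = exp (Pair hbar mu g n z).
Proof.
  unfold W_nr_sqrt, Pair. rewrite <- prodR_exp. apply prodR_ext; intros p _.
  rewrite <- prodR_exp. apply prodR_ext; intros q _.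
  destruct (Nat.ltb p q); [reflexivity|]. rewrite exp_0; reflexivity.
Qed.

Lemma psi_exp hbar mu g N l x y : Psi_l hbar mu g N l x y =
  exp (Pair hbar mu g N x + Pair hbar mu g (N - l) y
       + mu * g * INR l / (2 * hbar) * (sumR (N - l) (fun n => y n) - sumR N (fun m => x m))
       - Cross hbar mu g N (N - l) x y).
Proof.
  unfold Psi_l, K_l. rewrite !W_exp.
  assert (E : prodR N (fun m => prodR (N - l) (fun n => Rpower (2 * cosh (mu * (x m - y n) / 2)) (g / hbar)))
     = exp (Cross hbar mu g N (N - l) x y)).
  { unfold Cross. rewrite <- prodR_exp. apply prodR_ext; intros m _.
    rewrite <- prodR_exp. apply prodR_ext; intros n _. reflexivity. }
  rewrite E. unfold Rminus at 2. rewrite !exp_plus, exp_Ropp. unfold Rdiv at 1. ring.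
Qed.

Lemma upd_eq x j t : upd x j t j = t.
Proof. unfold upd. rewrite Nat.eqb_refl. reflexivity. Qed.
Lemma upd_neq x j t k : k <> j -> upd x j t k = x k.
Proof. intros H. unfold upd. apply Nat.eqb_neq in H. rewrite H. reflexivity. Qed.
Lemma upd_id x j : upd x j (x j) = x.
Proof. apply functional_extensionality; intros k. unfold upd. destruct (Nat.eqb_spec k j); subst; auto. Qed.

Lemma sum_upd n j (F : nat -> R -> R) z t : (j < n)%nat ->
  sumR n (fun m => F m (upd z j t m)) = F j t + sumR n (fun m => if Nat.eqb m j then 0 else F m (z m)).
Proof.
  intros Hj. rewrite <- (sumR_delta n j (fun m => F m t) Hj), <- sumR_plus.
  apply sumR_ext; intros m _. unfold upd. destruct (Nat.eqb m j); ring.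
Qed.

Lemma pair_upd n j (L : R -> R) z t : (j < n)%nat -> (forall w, L (- w) = L w) ->
  sumR n (fun p => sumR n (fun q => if Nat.ltb p q then L (upd z j t p - upd z j t q) else 0)) =
  sumR n (fun k => if Nat.eqb k j then 0 else L (t - z k)) +
  sumR n (fun p => sumR n (fun q => if Nat.ltb p q then
     (if Nat.eqb p j then 0 else if Nat.eqb q j then 0 else L (z p - z q)) else 0)).
Proof.
  intros Hj HL.
  transitivity (sumR n (fun p => sumR n (fun q =>
     (if Nat.eqb p j then (if Nat.ltb p q then L (t - z q) else 0) else 0)
   + (if Nat.eqb q j then (if Nat.ltb p q then L (t - z p) else 0) else 0)
   + (if Nat.ltb p q then (if Nat.eqb p j then 0 else if Nat.eqb q j then 0 else L (z p - z q)) else 0)))).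
  { apply sumR_ext; intros p _. apply sumR_ext; intros q _. unfold upd.
    destruct (Nat.ltb p q) eqn:Lt; destruct (Nat.eqb p j) eqn:E1; destruct (Nat.eqb q j) eqn:E2; try ring.
    - apply Nat.eqb_eq in E1, E2. apply Nat.ltb_lt in Lt. lia.
    - replace (z p - t) with (- (t - z p)) by ring. rewrite HL. ring. }
  set (X3 := fun p q => if Nat.ltb p q then (if Nat.eqb p j then 0 else if Nat.eqb q j then 0 else L (z p - z q)) else 0).
  set (X1 := fun p q => if Nat.eqb p j then (if Nat.ltb p q then L (t - z q) else 0) else 0).
  set (X2 := fun p q => if Nat.eqb q j then (if Nat.ltb p q then L (t - z p) else 0) else 0).
  transitivity (sumR n (fun p => sumR n (fun q => X1 p q)) + sumR n (fun p => sumR n (fun q => X2 p q))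
     + sumR n (fun p => sumR n (fun q => X3 p q))).
  { rewrite <- !sumR_plus. apply sumR_ext; intros. rewrite <- !sumR_plus. reflexivity. }
  f_equal.
  assert (E1 : sumR n (fun p => sumR n (fun q => X1 p q)) = sumR n (fun q => if Nat.ltb j q then L (t - z q) else 0)).
  { unfold X1. transitivity (sumR n (fun p => if Nat.eqb p j then sumR n (fun q => if Nat.ltb p q then L (t - z q) else 0) else 0)).
    - apply sumR_ext; intros. apply sumR_if.
    - apply (sumR_delta n j (fun p => sumR n (fun q => if Nat.ltb p q then L (t - z q) else 0)) Hj). }
  assert (E2 : sumR n (fun p => sumR n (fun q => X2 p q)) = sumR n (fun p => if Nat.ltb p j then L (t - z p) else 0)).
  { unfold X2. apply sumR_ext; intros p _.
    apply (sumR_delta n j (fun q => if Nat.ltb p q then L (t - z p) else 0) Hj). }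
  rewrite E1, E2, <- sumR_plus. apply sumR_ext; intros k _.
  destruct (Nat.ltb j k) eqn:L1; destruct (Nat.ltb k j) eqn:L2; destruct (Nat.eqb k j) eqn:E3;
  repeat match goal with
  | H : Nat.eqb _ _ = true |- _ => apply Nat.eqb_eq in H
  | H : Nat.eqb _ _ = false |- _ => apply Nat.eqb_neq in H
  | H : Nat.ltb _ _ = true |- _ => apply Nat.ltb_lt in H
  | H : Nat.ltb _ _ = false |- _ => apply Nat.ltb_ge in H
  end; try (exfalso; lia); ring.
Qed.

Lemma sinh_opp z : sinh (- z) = - sinh z.
Proof. unfold sinh. rewrite Ropp_involutive. field. Qed.
Lemma cosh_opp z : cosh (- z) = cosh z.
Proof. unfold cosh. rewrite Ropp_involutive. field. Qed.

Lemma LS_even hbar mu g w : LS hbar mu g (- w) = LS hbar mu g w.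
Proof. unfold LS. replace (mu * - w / 2) with (- (mu * w / 2)) by field. rewrite sinh_opp. f_equal. f_equal. ring. Qed.
Lemma LC_even hbar mu g w : LC hbar mu g (- w) = LC hbar mu g w.
Proof. unfold LC. replace (mu * - w / 2) with (- (mu * w / 2)) by field. rewrite cosh_opp. reflexivity. Qed.

Lemma psi_x hbar mu g N l x y j t : (j < N)%nat ->
  Psi_l hbar mu g N l (upd x j t) y =
  exp (phi hbar mu g N (N - l) j x y (- (mu * g * INR l / (2 * hbar)))
   (sumR N (fun p => sumR N (fun q => if Nat.ltb p q then
     (if Nat.eqb p j then 0 else if Nat.eqb q j then 0 else LS hbar mu g (x p - x q)) else 0))
    + Pair hbar mu g (N - l) y
    + mu * g * INR l / (2 * hbar) * (sumR (N - l) (fun n => y n) - sumR N (fun m => if Nat.eqb m j then 0 else x m))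
    - sumR N (fun m => if Nat.eqb m j then 0 else sumR (N - l) (fun n => LC hbar mu g (x m - y n)))) t).
Proof.
  intros Hj. rewrite psi_exp. f_equal. unfold phi, Pair, Cross.
  rewrite (pair_upd N j (LS hbar mu g) x t Hj (LS_even hbar mu g)).
  rewrite (sum_upd N j (fun m v => sumR (N - l) (fun n => LC hbar mu g (v - y n))) x t Hj).
  rewrite (sum_upd N j (fun m v => v) x t Hj). ring.
Qed.

Lemma psi_y hbar mu g N l x y n t : (n < N - l)%nat ->
  Psi_l hbar mu g N l x (upd y n t) =
  exp (phi hbar mu g (N - l) N n y x (mu * g * INR l / (2 * hbar))
   (Pair hbar mu g N x +
    sumR (N - l) (fun p => sumR (N - l) (fun q => if Nat.ltb p q then
     (if Nat.eqb p n then 0 else if Nat.eqb q n then 0 else LS hbar mu g (y p - y q)) else 0))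
    + mu * g * INR l / (2 * hbar) * (sumR (N - l) (fun k => if Nat.eqb k n then 0 else y k) - sumR N (fun m => x m))
    - sumR (N - l) (fun k => if Nat.eqb k n then 0 else sumR N (fun m => LC hbar mu g (x m - y k)))) t).
Proof.
  intros Hn. rewrite psi_exp. f_equal. unfold phi, Pair, Cross.
  rewrite (pair_upd (N - l) n (LS hbar mu g) y t Hn (LS_even hbar mu g)).
  rewrite (sumR_swap N (N - l) (fun m k => LC hbar mu g (x m - upd y n t k))).
  rewrite (sum_upd (N - l) n (fun k v => sumR N (fun m => LC hbar mu g (x m - v))) y t Hn).
  rewrite (sum_upd (N - l) n (fun m v => v) y t Hn).
  assert (E : sumR N (fun m => LC hbar mu g (x m - t)) = sumR N (fun m => LC hbar mu g (t - x m))).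
  { apply sumR_ext; intros. rewrite <- LC_even. f_equal. ring. }
  rewrite E. ring.
Qed.

Lemma partial2_x hbar mu g N l x y j : 0 < hbar -> 0 < mu -> (j < N)%nat -> distinct_coords N x ->
  partial2 (fun x' => Psi_l hbar mu g N l x' y) j x =
  Psi_l hbar mu g N l x y * (phi1 hbar mu g N (N - l) j x y (- (mu * g * INR l / (2 * hbar))) (x j) ^ 2
                             + phi2 hbar mu g N (N - l) j x y (x j)).
Proof.
  intros Hh Hm Hj Hd. unfold partial2.
  erewrite Derive_n_ext; [|intro t; apply (psi_x hbar mu g N l x y j t Hj)].
  rewrite phi_D2; auto.
  all: try (intros k Hk Hkj; apply Hd; auto; fail).
  rewrite <- (psi_x hbar mu g N l x y j (x j) Hj), upd_id. reflexivity.
Qed.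

Lemma partial2_y hbar mu g N l x y n : 0 < hbar -> 0 < mu -> (n < N - l)%nat -> distinct_coords (N - l) y ->
  partial2 (fun y' => Psi_l hbar mu g N l x y') n y =
  Psi_l hbar mu g N l x y * (phi1 hbar mu g (N - l) N n y x (mu * g * INR l / (2 * hbar)) (y n) ^ 2
                             + phi2 hbar mu g (N - l) N n y x (y n)).
Proof.
  intros Hh Hm Hn Hd. unfold partial2.
  erewrite Derive_n_ext; [|intro t; apply (psi_y hbar mu g N l x y n t Hn)].
  rewrite phi_D2; auto.
  all: try (intros k Hk Hkj; apply Hd; auto; fail).
  rewrite <- (psi_y hbar mu g N l x y n (y n) Hn), upd_id. reflexivity.
Qed.

Lemma arg_eq mu a b : mu * (a - b) / 2 = mu * a / 2 - mu * b / 2.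
Proof. field. Qed.

Section Conv.
Variables (hbar mu g : R) (N M : nat) (x y : nat -> R) (s : R).
Let u := fun i => mu * x i / 2.
Let v := fun i => mu * y i / 2.

Lemma phi1_x j : phi1 hbar mu g N M j x y s (x j) =
  g / hbar * (mu / 2) * (Aof N u j - Bof M u v j) + s.
Proof.
  unfold phi1, Aof, Bof. rewrite Rmult_minus_distr_l, <- !sumR_scal. f_equal. f_equal.
  - apply sumR_ext; intros k _. destruct (Nat.eqb k j); [ring|].
    unfold LS1, cth, u. rewrite arg_eq. reflexivity.
  - apply sumR_ext; intros k _. unfold LC1, th, u, v. rewrite arg_eq. reflexivity.
Qed.

Lemma phi2_x j : phi2 hbar mu g N M j x y (x j) =
  - (g / hbar) * (mu / 2) ^ 2 * (Pof N u j + sumR M (fun n => / cosh (u j - v n) ^ 2)).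
Proof.
  transitivity (- (g / hbar) * (mu / 2) ^ 2 * Pof N u j - (g / hbar) * (mu / 2) ^ 2 * sumR M (fun n => / cosh (u j - v n) ^ 2)); [|ring].
  unfold phi2, Pof. rewrite <- !sumR_scal. f_equal.
  - apply sumR_ext; intros k _. destruct (Nat.eqb k j); [ring|].
    unfold LS2, u. rewrite arg_eq. unfold Rdiv. ring.
  - apply sumR_ext; intros k _. unfold LC2, u, v. rewrite arg_eq. unfold Rdiv. ring.
Qed.

Lemma phi1_y n : phi1 hbar mu g M N n y x s (y n) =
  g / hbar * (mu / 2) * (Aof M v n + Cof N u v n) + s.
Proof.
  assert (E1 : sumR M (fun k => if Nat.eqb k n then 0 else LS1 hbar mu g (y n - y k)) = g / hbar * (mu / 2) * Aof M v n).
  { unfold Aof. rewrite <- sumR_scal. apply sumR_ext; intros k _. destruct (Nat.eqb k n); [ring|].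
    unfold LS1, cth, v. rewrite arg_eq. reflexivity. }
  assert (E2 : sumR N (fun m => LC1 hbar mu g (y n - x m)) = -1 * (g / hbar * (mu / 2) * Cof N u v n)).
  { unfold Cof. rewrite <- !sumR_scal. apply sumR_ext; intros k _. unfold LC1, u, v. rewrite arg_eq.
    rewrite (th_anti (mu * y n / 2) (mu * x k / 2)). unfold th. ring. }
  unfold phi1. rewrite E1, E2. ring.
Qed.

Lemma phi2_y n : phi2 hbar mu g M N n y x (y n) =
  - (g / hbar) * (mu / 2) ^ 2 * (Pof M v n + sumR N (fun m => / cosh (v n - u m) ^ 2)).
Proof.
  transitivity (- (g / hbar) * (mu / 2) ^ 2 * Pof M v n - (g / hbar) * (mu / 2) ^ 2 * sumR N (fun m => / cosh (v n - u m) ^ 2)); [|ring].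
  unfold phi2, Pof. rewrite <- !sumR_scal. f_equal.
  - apply sumR_ext; intros k _. destruct (Nat.eqb k n); [ring|].
    unfold LS2, v. rewrite arg_eq. unfold Rdiv. ring.
  - apply sumR_ext; intros k _. unfold LC2, u, v. rewrite arg_eq. unfold Rdiv. ring.
Qed.
End Conv.

Lemma pair_lt n (f : nat -> nat -> R) : (forall j k, f j k = f k j) ->
  2 * sumR n (fun j => sumR n (fun k => if Nat.ltb j k then f j k else 0)) =
  sumR n (fun j => sumR n (fun k => if Nat.eqb k j then 0 else f j k)).
Proof.
  intros Hs. rewrite (pair_sym n (fun j k => if Nat.ltb j k then f j k else 0)).
  apply sumR_ext; intros j _. apply sumR_ext; intros k _.
  destruct (Nat.ltb j k) eqn:L1; destruct (Nat.ltb k j) eqn:L2; destruct (Nat.eqb k j) eqn:E3;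
  repeat match goal with
  | H : Nat.eqb _ _ = true |- _ => apply Nat.eqb_eq in H
  | H : Nat.eqb _ _ = false |- _ => apply Nat.eqb_neq in H
  | H : Nat.ltb _ _ = true |- _ => apply Nat.ltb_lt in H
  | H : Nat.ltb _ _ = false |- _ => apply Nat.ltb_ge in H
  end; try (exfalso; lia); try ring. rewrite Hs; ring.
Qed.

Lemma pot_eq mu n z :
  sumR n (fun j => sumR n (fun l => if Nat.ltb j l then mu ^ 2 / (4 * sinh (mu * (z j - z l) / 2) ^ 2) else 0))
  = (mu / 2) ^ 2 / 2 * sumR n (Pof n (fun i => mu * z i / 2)).
Proof.
  assert (H := pair_lt n (fun j l => mu ^ 2 / (4 * sinh (mu * (z j - z l) / 2) ^ 2))).
  cut (2 * sumR n (fun j => sumR n (fun l => if Nat.ltb j l then mu ^ 2 / (4 * sinh (mu * (z j - z l) / 2) ^ 2) else 0))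
     = (mu / 2) ^ 2 * sumR n (Pof n (fun i => mu * z i / 2))); [intros; lra|].
  rewrite H.
  - unfold Pof. rewrite <- sumR_scal. apply sumR_ext; intros j _. rewrite <- sumR_scal.
    apply sumR_ext; intros k _. destruct (Nat.eqb k j); [ring|]. rewrite arg_eq. unfold Rdiv. 
    rewrite Rinv_mult. replace (/ 4) with ((/ 2) ^ 2) by field. ring.
  - intros j k. replace (mu * (z k - z j) / 2) with (- (mu * (z j - z k) / 2)) by field.
    rewrite sinh_opp. f_equal. f_equal. ring.
Qed.


Lemma lin_sum n K al be f g1 h :
  sumR n (fun j => K * (al * f j - be * (g1 j + h j))) = K * (al * sumR n f - be * (sumR n g1 + sumR n h)).
Proof. induction n; [simpl; ring|]. rewrite !sumR_S, IHn. ring. Qed.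

Theorem corollary4p2 (hbar mu g : R) (N l : nat) (x y : nat -> R) :
  0 < hbar -> 0 < mu -> 0 < g -> (l <= N)%nat ->
  distinct_coords N x -> distinct_coords (N - l) y ->
  H_nr hbar mu g N (fun x' => Psi_l hbar mu g N l x' y) x
  - H_nr hbar mu g (N - l) (fun y' => Psi_l hbar mu g N l x y') y
  = - (mu ^ 2 * g ^ 2 / 24) * INR l * (4 * INR l ^ 2 - 1) * Psi_l hbar mu g N l x y.
Proof.
  intros Hh Hm Hg Hl Hx Hy.
  assert (HL : INR (N - l) = INR N - INR l) by (apply minus_INR; lia).
  assert (Hu : distinct N (fun i => mu * x i / 2)).
  { intros i j Hi Hj Hij E. apply (Hx i j Hi Hj Hij). nra. }
  assert (Hv : distinct (N - l) (fun i => mu * y i / 2)).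
  { intros i j Hi Hj Hij E. apply (Hy i j Hi Hj Hij). nra. }
  pose proof (ALG N (N - l) _ _ Hu Hv) as HA.
  set (Psi := Psi_l hbar mu g N l x y).
  unfold H_nr.
  rewrite (sumR_ext N (fun j => partial2 (fun x' => Psi_l hbar mu g N l x' y) j x)
    (fun j => Psi * ((g / hbar * (mu / 2)) ^ 2 * ((Aof N (fun i => mu * x i / 2) j - Bof (N - l) (fun i => mu * x i / 2) (fun i => mu * y i / 2) j - (INR N - INR (N - l))) ^ 2)
       - g / hbar * (mu / 2) ^ 2 * (Pof N (fun i => mu * x i / 2) j + sumR (N - l) (fun n => / cosh (mu * x j / 2 - mu * y n / 2) ^ 2))))).
  2: { intros j Hj. rewrite partial2_x by auto. rewrite phi1_x, phi2_x. unfold Psi. rewrite HL. field. lra. }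
  rewrite (sumR_ext (N - l) (fun n => partial2 (fun y' => Psi_l hbar mu g N l x y') n y)
    (fun n => Psi * ((g / hbar * (mu / 2)) ^ 2 * ((Aof (N - l) (fun i => mu * y i / 2) n + Cof N (fun i => mu * x i / 2) (fun i => mu * y i / 2) n + (INR N - INR (N - l))) ^ 2)
       - g / hbar * (mu / 2) ^ 2 * (Pof (N - l) (fun i => mu * y i / 2) n + sumR N (fun m => / cosh (mu * y n / 2 - mu * x m / 2) ^ 2))))).
  2: { intros n Hn. rewrite partial2_y by auto. rewrite phi1_y, phi2_y. unfold Psi. rewrite HL. field. lra. }
  rewrite !lin_sum, !pot_eq.
  assert (HQ : sumR N (fun j => sumR (N - l) (fun n => / cosh (mu * x j / 2 - mu * y n / 2) ^ 2)) =
               sumR (N - l) (fun j => sumR N (fun m => / cosh (mu * y j / 2 - mu * x m / 2) ^ 2))).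
  { rewrite sumR_swap. apply sumR_ext; intros; apply sumR_ext; intros. apply sech_sym. }
  rewrite HQ. fold Psi. rewrite HL in HA. rewrite HL.
  replace (INR N - (INR N - INR l)) with (INR l) in * by ring.
  set (X := sumR N _) in HA |- *.
  set (Y := sumR (N - l) (fun n => (Aof (N - l) (fun i => mu * y i / 2) n + Cof N (fun i => mu * x i / 2) (fun i => mu * y i / 2) n + INR l) ^ 2)) in HA |- *.
  set (P1 := sumR N (Pof N (fun i => mu * x i / 2))) in HA |- *.
  set (P2 := sumR (N - l) (Pof (N - l) (fun i => mu * y i / 2))) in HA |- *.
  replace X with (Y + P1 - P2 + INR l * (4 * INR l ^ 2 - 1) / 3) by lra.
  field. lra.
Qed.
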